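(* Let $G_{\max}=(V,E_{\max})$ be a finite, simple, connected, undirected graph, and let $\lambda',\mu',\gamma'>0$ with $\frac{\lambda'}{\mu'}>1$ and $0<\gamma'\le 1$ (Regime III). For a network state $\mathbf{A}$ (a subset $E(\mathbf{A})\subseteq E_{\max}$ of closed edges) let $g(E(\mathbf{A}))$ be the number of $C_3$ subgraphs (triangles) formed by $E(\mathbf{A})$, and call a maximizer of $\pi(\mathbf{A})\propto(\lambda'/\mu')^{|E(\mathbf{A})|}\gamma'^{\,g(E(\mathbf{A}))}$ over all network states a most-probable network (for TRI-DBP). If $\lambda'\gamma'<\mu'$, then the most-probable networks are exactly the network states $\mathbf{A}^*$ with $g(E(\mathbf{A}^* ))=0$ and $|E(\mathbf{A}^* )|$ maximum among such states; equivalently, $(V,E(\mathbf{A}^* ))$ is a largest possible (maximum number of edges) triangle-free subgraph of $G_{\max}$. *)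

(* Defs.v *)
From HB Require Import structures.
From mathcomp Require Import all_boot all_order all_algebra.
Set Implicit Arguments. Unset Strict Implicit. Unset Printing Implicit Defensive.
Import Order.TTheory GRing.Theory Num.Theory.

Definition simple_graph (V : finType) (e : rel V) : Prop :=
  symmetric e /\ irreflexive e.

Definition connected_graph (V : finType) (e : rel V) : Prop :=
  forall x y : V, connect e x y.

Definition edges (V : finType) (e : rel V) : {set {set V}} :=
  [set E : {set V} | [exists x, exists y, e x y && (E == [set x; y])]].

(* A network state: a set of closed edges, i.e. a subset of E_max. *)
Definition network_state (V : finType) (e : rel V) (A : {set {set V}}) : Prop :=
  A \subset edges e.

Definition triangles (V : finType) (A : {set {set V}}) : {set {set V}} :=
  [set T : {set V} | (#|T| == 3) &&
     [forall x in T, forall y in T, (x != y) ==> ([set x; y] \in A)]].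

Definition g (V : finType) (A : {set {set V}}) : nat := #|triangles A|.

Local Open Scope ring_scope.

Definition weight (R : realFieldType) (lam mu gam : R) (V : finType)
  (A : {set {set V}}) : R :=
  (lam / mu) ^+ #|A| * gam ^+ g A.

Definition most_probable (R : realFieldType) (lam mu gam : R) (V : finType)
  (e : rel V) (A : {set {set V}}) : Prop :=
  network_state e A /\
  forall B, network_state e B -> weight lam mu gam B <= weight lam mu gam A.

(* Main.v *)
Require Import Defs.
From mathcomp Require Import all_boot all_order all_algebra.
Import Order.TTheory GRing.Theory Num.Theory.

Lemma triangles_sub (V : finType) (B B' : {set {set V}}) :
  B' \subset B -> triangles B' \subset triangles B.
Proof.
move=> sB; apply/subsetP => T; rewrite !inE => /andP[-> /= H].
apply/forall_inP => x xT; apply/forall_inP => y yT; apply/implyP => nxy.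
by apply: (subsetP sB); move/forall_inP: H => /(_ x xT)/forall_inP/(_ y yT)/implyP; apply.
Qed.

Lemma key (V : finType) (e : rel V) (B : {set {set V}}) :
  irreflexive e -> B \subset edges e ->
  exists B' : {set {set V}}, [/\ B' \subset B, g B' = 0%N & (#|B| <= #|B'| + g B)%N].
Proof.
move=> irr subB.
set D := [set odflt set0 [pick E in B | E \subset T] | T : {set V} in triangles B].
exists (B :\: D); split.
- exact: subsetDl.
- apply/eqP; rewrite cards_eq0; apply/eqP/setP => T; rewrite in_set0.
  apply/negbTE/negP => HT.
  have HT' : T \in triangles B := subsetP (@triangles_sub _ _ _ (subsetDl B D)) _ HT.
  have hD : odflt set0 [pick E in B | E \subset T] \in D := imset_f _ HT'.
  move: HT'; rewrite inE => /andP[/eqP T3 HTB].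
  move: HT; rewrite inE => /andP[_ HTB'].
  move: hD; case: pickP => [E /andP[EB ET]|none] /= hD.
  + move: (subsetP subB E EB); rewrite inE => /existsP[x /existsP[y /andP[exy /eqP EE]]].
    have xT : x \in T by apply: (subsetP ET); rewrite EE !inE eqxx.
    have yT : y \in T by apply: (subsetP ET); rewrite EE !inE eqxx orbT.
    have nxy : x != y by apply/eqP => exy'; move: exy; rewrite exy' irr.
    move/forall_inP: HTB' => /(_ x xT)/forall_inP/(_ y yT)/implyP/(_ nxy).
    by rewrite -EE !inE hD.
  + have : (1 < #|T|)%N by rewrite T3.
    case/card_gt1P => x [y [xT yT nxy]].
    move/forall_inP: HTB => /(_ x xT)/forall_inP/(_ y yT)/implyP/(_ nxy) xyB.
    move: (none [set x; y]); rewrite xyB /=.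
    have -> : [set x; y] \subset T.
      by apply/subsetP => z; rewrite !inE => /orP[]/eqP->.
    by [].
- rewrite -(cardsID D B) addnC leq_add2l /g.
  apply: leq_trans (subset_leq_card (subsetIr B D)) _.
  exact: leq_imset_card.
Qed.

Local Open Scope ring_scope.

Lemma weight0 (R : realFieldType) (lam mu gam : R) (V : finType) (B : {set {set V}}) :
  g B = 0%N -> weight lam mu gam B = (lam / mu) ^+ #|B|.
Proof. by move=> h; rewrite /weight h expr0 mulr1. Qed.

Lemma key_weight (R : realFieldType) (lam mu gam : R) (V : finType) (e : rel V)
  (B : {set {set V}}) :
  irreflexive e -> B \subset edges e -> 0 < lam -> 0 < mu -> 0 < gam ->
  1 < lam / mu -> gam <= 1 -> lam * gam < mu ->
  exists B' : {set {set V}}, [/\ B' \subset edges e, g B' = 0%N &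
    weight lam mu gam B <= (lam / mu) ^+ #|B'| * (lam / mu * gam) ^+ g B].
Proof.
move=> irr subB l0 m0 g0 r1 g1 lgm.
have [B' [sB gB' cB]] := @key _ _ _ irr subB.
exists B'; split => //; first exact: subset_trans sB subB.
rewrite /weight [X in _ <= _ * X]exprMn mulrA -exprD ler_pM2r ?exprn_gt0 //.
exact: ler_weXn2l (ltW r1) _ _ cB.
Qed.

Theorem theorem7 (R : realFieldType) (V : finType) (e : rel V)
  (lam mu gam : R) :
  simple_graph e -> connected_graph e ->
  0 < lam -> 0 < mu -> 0 < gam ->
  1 < lam / mu -> gam <= 1 ->
  lam * gam < mu ->
  forall A : {set {set V}},
    most_probable lam mu gam e A <->
    [/\ network_state e A, g A = 0%N &
        forall B, network_state e B -> g B = 0%N -> (#|B| <= #|A|)%N].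
Proof.
move=> [_ irr] _ l0 m0 g0 r1 g1 lgm A.
have r0 : 0 < lam / mu by apply: lt_trans r1.
have rg0 : 0 <= lam / mu * gam by rewrite mulr_ge0 // ltW.
have rg1 : lam / mu * gam < 1.
  by rewrite mulrAC ltr_pdivrMr // mul1r.
split.
- move=> [nA maxA]; have gA : g A = 0%N.
    apply/eqP/negPn/negP => gAn.
    have [B' [sB' gB' wle]] := @key_weight _ _ _ _ _ _ _ irr nA l0 m0 g0 r1 g1 lgm.
    have := maxA B' sB'; rewrite weight0 // => wB'.
    have : weight lam mu gam A < (lam / mu) ^+ #|B'|.
      apply: le_lt_trans wle _.
      rewrite gtr_pMr ?exprn_gt0 //.
      by rewrite exprn_ilt1.
    by rewrite ltNge wB'.
  split => // B nB gB.
  have := maxA B nB; rewrite !weight0 //.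
  by rewrite ler_eXn2l.
- move=> [nA gA maxA]; split => // B nB.
  have [B' [sB' gB' wle]] := @key_weight _ _ _ _ _ _ _ irr nB l0 m0 g0 r1 g1 lgm.
  apply: le_trans wle _.
  rewrite weight0 //.
  apply: (@le_trans _ _ ((lam / mu) ^+ #|B'|)).
    rewrite ler_piMr ?exprn_ge0 ?(ltW r0) //.
    exact: exprn_ile1 rg0 (ltW rg1).
  by rewrite ler_eXn2l // maxA.
Qed.
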